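(* Let $n$ be a positive integer divisible by $8$, let $\varepsilon>0$ and $d=1/(128\varepsilon)$. For $S\subseteq[n]$ with $|S|=n/2$, let $G_S$ be the weighted complete bipartite graph on $[n]$ with an edge between every vertex of $S$ and every vertex of $[n]\setminus S$, each of weight $2d/n$. Let $\mathcal A$ be a collection of such graphs $G_S$ such that for any two distinct $G_S,G_T\in\mathcal A$, $\frac n8<|S\cap T|<\frac{3n}8$. Then for any distinct $G_S,G_T\in\mathcal A$ and any $R\subseteq[n]$: if $\Phi_{G_S}(R)>\frac{7nd}{16}$, then $\Phi_{G_T}(R)\le\frac{6nd}{16}$.
   Context: For a weighted graph $G$ on $[n]$ and $R\subseteq[n]$, $\Phi_G(R)$ denotes the total weight of edges with exactly one endpoint in $R$ (the cut specified by $R$). *)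

(* Defs.v *)
From HB Require Import structures.
From mathcomp Require Import all_boot all_order all_algebra.
Set Implicit Arguments. Unset Strict Implicit. Unset Printing Implicit Defensive.
Import Order.TTheory GRing.Theory Num.Theory.
Local Open Scope ring_scope.

(* A weighted graph on [n] = 'I_n is given by a symmetric weight function
   w : 'I_n -> 'I_n -> R; the weight of the (unordered) edge {i,j} is w i j. *)

Definition bipG (R : numFieldType) (n : nat) (d : R) (S : {set 'I_n})
  (i j : 'I_n) : R :=
  if (i \in S) != (j \in S) then 2 * d / n%:R else 0.

Definition cutw (R : numFieldType) (n : nat) (w : 'I_n -> 'I_n -> R)
  (X : {set 'I_n}) : R :=
  \sum_(i < n) \sum_(j < n | (i < j)%N && ((i \in X) != (j \in X))) w i j.

(* Main.v *)
Require Import Defs.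
From HB Require Import structures.
From mathcomp Require Import all_boot all_order all_algebra.
From mathcomp Require Import ring lra zify.
Import Order.TTheory GRing.Theory Num.Theory.
Local Open Scope ring_scope.

Lemma key (R : realFieldType) (m k x1 x2 x3 x4 : R) :
  0 < m -> m/4 < k -> k < 3 * m/4 -> 0 <= x1 -> x1 <= k -> 0 <= x2 -> x2 <= m - k ->
  0 <= x3 -> x3 <= m - k -> 0 <= x4 -> x4 <= k ->
  ((x1+x2+x3+x4) * m - 2*(x1+x2)*(x1+x2+x3+x4) + 2*(x1+x2)^+2) > 7/8 * m^+2 ->
  ((x1+x2+x3+x4) * m - 2*(x1+x3)*(x1+x2+x3+x4) + 2*(x1+x3)^+2) <= 3/4 * m^+2.
Proof.
move=> m0 k1 k2 a1 a1' a2 a2' a3 a3' a4 a4' H.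
set u := m - x1 - x2; set v := x3 + x4.
set u' := m - x1 - x3; set v' := x2 + x4.
have eS : (x1+x2+x3+x4) * m - 2*(x1+x2)*(x1+x2+x3+x4) + 2*(x1+x2)^+2
   = m^+2 - (m * (u + v) - 2 * u * v) by rewrite /u /v; ring.
have eT : (x1+x2+x3+x4) * m - 2*(x1+x3)*(x1+x2+x3+x4) + 2*(x1+x3)^+2
   = m^+2 - (m * (u' + v') - 2 * u' * v') by rewrite /u' /v'; ring.
rewrite eT; rewrite eS in H.
have hS : m * (u+v) - (u+v)^+2/2 < m^+2/8.
  have : 0 <= (u - v)^+2 by apply: sqr_ge0.
  lra.
have hT : m * (u'+v') - (u'+v')^+2/2 <= m * (u' + v') - 2 * u' * v'.
  have : 0 <= (u' - v')^+2 by apply: sqr_ge0.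
  lra.
have e1 : (u+v) + (u'+v') = 2*(k-x1) + 2*x4 + 2*(m-k) by rewrite /u /v /u' /v'; ring.
have e2 : (u'+v') - (u+v) = 2*x2 - 2*x3 by rewrite /u /v /u' /v'; ring.
set s := u+v in hS e1 e2; set s' := u'+v' in hT e1 e2 *.
suff : m^+2/4 <= m * s' - s'^+2/2 by lra.
have [hs|hs] := lerP s m.
- have hs5 : s < m/5.
    rewrite ltNge; apply/negP => h5.
    have : 0 <= (s - m/5) * (m - s) by apply: mulr_ge0; lra.
    nra.
  have : 0 <= (s' - 3* m/10) * (17* m/10 - s') by apply: mulr_ge0; lra.
  nra.
- have hs5 : 9* m/5 < s.
    rewrite ltNge; apply/negP => h5.
    have : 0 <= (9* m/5 - s) * (s - m) by apply: mulr_ge0; lra.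
    nra.
  have : 0 <= (s' - 3* m/10) * (17* m/10 - s') by apply: mulr_ge0; lra.
  nra.
Qed.

Lemma half_sum (R : realFieldType) n (F : 'I_n -> 'I_n -> R) :
  (forall i j, F i j = F j i) -> (forall i, F i i = 0) ->
  \sum_(i < n) \sum_(j < n) F i j = 2 * \sum_(i < n) \sum_(j < n | (i < j)%N) F i j.
Proof.
move=> Fs F0.
have H1 : forall i : 'I_n, \sum_(j < n) F i j =
   \sum_(j < n | (i < j)%N) F i j + \sum_(j < n | (j < i)%N) F i j.
  move=> i; rewrite (bigID (fun j : 'I_n => (i < j)%N)) /=; congr (_ + _).
  rewrite (bigID (fun j : 'I_n => (j < i)%N)) /=.
  rewrite [X in _ + X]big1 ?addr0.
    by apply: eq_bigl => j; case: ltngtP.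
  move=> j /andP [h1 h2]; have -> : j = i.
    move: h1 h2; rewrite -!leqNgt => h1 h2.
    by apply/val_inj/eqP; rewrite /= eqn_leq h1 h2.
  exact: F0.
rewrite (eq_bigr _ (fun i _ => H1 i)) big_split /=.
have -> : \sum_(i < n) \sum_(j < n | (j < i)%N) F i j =
          \sum_(i < n) \sum_(j < n | (i < j)%N) F i j.
  rewrite (eq_bigr (fun i : 'I_n => \sum_(j < n) if (j < i)%N then F i j else 0));
    last by move=> i _; rewrite big_mkcond.
  rewrite exchange_big /=; apply eq_bigr => i _.
  rewrite [RHS]big_mkcond; apply eq_bigr => j _; by rewrite Fs.
by ring.
Qed.

Lemma lin4 (R : realFieldType) n (a b : 'I_n -> R) (al be ga de : R) :
  \sum_(j < n) (al + be * a j + ga * b j + de * (a j * b j)) =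
  al * n%:R + be * \sum_(j < n) a j + ga * \sum_(j < n) b j + de * \sum_(j < n) (a j * b j).
Proof.
rewrite !big_split /= -!mulr_sumr sumr_const card_ord.
by rewrite mulr_natr.
Qed.

Lemma ind_neq (R : realFieldType) (p q : bool) :
  (if p != q then 1 else 0 : R) = p%:R + q%:R - 2 * p%:R * q%:R.
Proof. by case: p; case: q => /=; ring. Qed.

Lemma sum_ind (R : realFieldType) n (X : {set 'I_n}) :
  \sum_(i < n) ((i \in X)%:R : R) = #|X|%:R.
Proof.
rewrite (eq_bigr (fun i => if i \in X then 1 else 0)); last by move=> i _; case: (i \in X).
by rewrite -big_mkcond sumr_const.
Qed.

Lemma cut_formula (R : realFieldType) n (d : R) (S X : {set 'I_n}) :
  cutw (bipG d S) X = 2 * d / n%:R *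
   (#|X|%:R * #|S|%:R + #|X :&: S|%:R * n%:R - 2 * #|S|%:R * #|X :&: S|%:R
    - 2 * #|X|%:R * #|X :&: S|%:R + 2 * #|X :&: S|%:R ^+ 2).
Proof.
set c := 2 * d / n%:R.
pose a i := ((i \in X)%:R : R); pose b i := ((i \in S)%:R : R).
pose F (i j : 'I_n) := c * ((a i + a j - 2 * a i * a j) * (b i + b j - 2 * b i * b j)).
have -> : cutw (bipG d S) X = \sum_(i < n) \sum_(j < n | (i < j)%N) F i j.
  rewrite /cutw; apply: eq_bigr => i _; rewrite big_mkcondr /=.
  apply: eq_bigr => j _; rewrite /F /a /b -!ind_neq /bipG.
  by case: (_ != _); case: (_ != _); rewrite ?mulr1 ?mulr0 ?mul0r ?mulr1.
have H := @half_sum _ _ F.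
have -> : \sum_(i < n) \sum_(j < n | (i < j)%N) F i j = (\sum_(i < n) \sum_(j < n) F i j) / 2.
  rewrite H.
  - by field.
  - by move=> i j; rewrite /F; ring.
  - by move=> i; rewrite /F /a /b; case: (i \in X); case: (i \in S); rewrite /=; ring.
set A := \sum_(j < n) a j; set B := \sum_(j < n) b j; set C := \sum_(j < n) (a j * b j).
have inner : forall i, \sum_(j < n) F i j =
   c * (a i * b i * n%:R + a i * B - 2 * a i * b i * B + b i * A + C - 2 * b i * C
        - 2 * a i * b i * A - 2 * a i * C + 4 * a i * b i * C).
  move=> i.
  rewrite (eq_bigr (fun j => c * (a i * b i) + (c * (b i - 2 * a i * b i)) * a j
     + (c * (a i - 2 * a i * b i)) * b j + (c * (1 - 2 * b i - 2 * a i + 4 * a i * b i)) * (a j * b j))).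
    by rewrite lin4 -/A -/B -/C; ring.
  by move=> j _; rewrite /F; ring.
rewrite (eq_bigr _ (fun i _ => inner i)).
rewrite (eq_bigr (fun i => c * C + (c * (B - 2 * C)) * a i + (c * (A - 2 * C)) * b i
    + (c * (n%:R - 2 * B - 2 * A + 4 * C)) * (a i * b i))); last by move=> i _; ring.
rewrite lin4 -/A -/B -/C.
have eA : A = #|X|%:R by rewrite /A sum_ind.
have eB : B = #|S|%:R by rewrite /B sum_ind.
have eC : C = #|X :&: S|%:R.
  rewrite /C -sum_ind; apply: eq_bigr => i _; rewrite /a /b inE.
  by case: (i \in X); case: (i \in S); rewrite ?mulr1 ?mulr0 ?mul0r.
by rewrite eA eB eC; field.
Qed.

Lemma final (R : realFieldType) (d m Xc P Q : R) : 0 < d -> 0 < m ->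
 (7/8 * m^+2 < Xc * m - 2*P*Xc + 2*P^+2 -> Xc * m - 2*Q*Xc + 2*Q^+2 <= 3/4 * m^+2) ->
 7 * (2 * m) * d / 16 < 2 * d / (2 * m) * (Xc * m + P * (2 * m) - 2 * m * P - 2 * Xc * P + 2 * P^+2) ->
 2 * d / (2 * m) * (Xc * m + Q * (2 * m) - 2 * m * Q - 2 * Xc * Q + 2 * Q^+2) <= 6 * (2 * m) * d / 16.
Proof.
move=> d0 m0 K H.
have m0' : m != 0 by rewrite lt0r_neq0.
have dm : 0 < d / m by apply: divr_gt0.
have eP : 2 * d / (2 * m) * (Xc * m + P * (2 * m) - 2 * m * P - 2 * Xc * P + 2 * P^+2)
   = d / m * (Xc * m - 2*P*Xc + 2*P^+2) by field.
have eQ : 2 * d / (2 * m) * (Xc * m + Q * (2 * m) - 2 * m * Q - 2 * Xc * Q + 2 * Q^+2)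
   = d / m * (Xc * m - 2*Q*Xc + 2*Q^+2) by field.
have e7 : 7 * (2 * m) * d / 16 = d / m * (7/8 * m^+2) by field.
have e6 : 6 * (2 * m) * d / 16 = d / m * (3/4 * m^+2) by field.
rewrite eP e7 ltr_pM2l // in H.
by rewrite eQ e6 ler_pM2l //; apply: K.
Qed.

Theorem lemma6p11 (R : realFieldType) (n : nat) (eps : R)
  (A : {set {set 'I_n}}) :
  (0 < n)%N -> (8 %| n)%N -> 0 < eps ->
  let d := 1 / (128 * eps) in
  (forall S, S \in A -> #|S| = (n %/ 2)%N) ->
  (forall S T, S \in A -> T \in A -> bipG d S <> bipG d T ->
     (n%:R : R) / 8 < (#|S :&: T|%:R : R) /\ (#|S :&: T|%:R : R) < 3 * (n%:R : R) / 8) ->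
  forall S T, S \in A -> T \in A -> bipG d S <> bipG d T ->
  forall X : {set 'I_n},
    cutw (bipG d S) X > 7 * n%:R * d / 16 ->
    cutw (bipG d T) X <= 6 * n%:R * d / 16.
Proof.
move=> n0 n8 e0 d hA hAA S T SA TA neq X hcut.
have [k1 k2] := hAA S T SA TA neq.
have d0 : 0 < d by rewrite /d; apply: divr_gt0 => //; apply: mulr_gt0.
have [m hm] : exists m, (n %/ 2)%N = m by exists (n %/ 2)%N.
have nm : n = (m + m)%N.
  rewrite -hm addnn -mul2n mulnC divnK //.
  by apply: dvdn_trans n8.
have cS := hA S SA; have cT := hA T TA; rewrite hm in cS cT.
set k := #|S :&: T|.
set x1 := #|X :&: S :&: T|.
set x2 := #|(X :&: S) :\: T|.
set x3 := #|(X :&: T) :\: S|.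
set x4 := #|X :\: (S :|: T)|.
have hP : #|X :&: S| = (x1 + x2)%N by rewrite /x1 /x2 cardsID.
have hQ : #|X :&: T| = (x1 + x3)%N.
  rewrite /x1 /x3 -(cardsID S (X :&: T)) (_ : X :&: T :&: S = X :&: S :&: T) //.
  by apply/setP => i; rewrite !inE; case: (i \in X); case: (i \in S); case: (i \in T).
have hX : #|X| = (x1 + x2 + x3 + x4)%N.
  suff h4 : #|X :\: S| = (x3 + x4)%N by rewrite -(cardsID S X) hP h4 !addnA.
  rewrite -(cardsID T (X :\: S)) (_ : (X :\: S) :&: T = (X :&: T) :\: S).
    rewrite (_ : (X :\: S) :\: T = X :\: (S :|: T)) //.
    by apply/setP => i; rewrite !inE; case: (i \in X); case: (i \in S); case: (i \in T).
  by apply/setP => i; rewrite !inE; case: (i \in X); case: (i \in S); case: (i \in T).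
have b1 : (x1 <= k)%N.
  apply: subset_leq_card; apply/subsetP => i; rewrite !inE.
  by case: (i \in X); case: (i \in S); case: (i \in T).
have eST : (k + #|S :\: T| = m)%N by rewrite /k cardsID cS.
have eTS : (k + #|T :\: S| = m)%N by rewrite /k setIC cardsID cT.
have b2 : (x2 + k <= m)%N.
  rewrite -eST addnC leq_add2l; apply: subset_leq_card; apply/subsetP => i; rewrite !inE.
  by case: (i \in X); case: (i \in S); case: (i \in T).
have b3 : (x3 + k <= m)%N.
  rewrite -eTS addnC leq_add2l; apply: subset_leq_card; apply/subsetP => i; rewrite !inE.
  by case: (i \in X); case: (i \in S); case: (i \in T).
have b4 : (x4 <= k)%N.
  have e1 : (#|S :|: T| + k = m + m)%N by rewrite /k cardsUI cS cT.
  have e2 : (#|S :|: T| + #|~: (S :|: T)| = n)%N by rewrite cardsC card_ord.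
  have : (x4 <= #|~: (S :|: T)|)%N.
    apply: subset_leq_card; apply/subsetP => i; rewrite !inE.
    by case: (i \in X); case: (i \in S); case: (i \in T).
  lia.
have m0 : (0 < m)%N by lia.
rewrite !cut_formula cS cT hP hQ hX in hcut *.
have nR : (n%:R : R) = 2 * m%:R by rewrite nm natrD; ring.
rewrite nR in hcut k1 k2 *.
have mR : (0 : R) < m%:R by rewrite ltr0n.
have Hkey := @key R m%:R k%:R x1%:R x2%:R x3%:R x4%:R mR.
have kb1 : (m%:R : R) / 4 < k%:R by lra.
have kb2 : (k%:R : R) < 3 * m%:R / 4 by lra.
have r2 : (x2%:R : R) <= m%:R - k%:R by rewrite lerBrDr -natrD ler_nat.
have r3 : (x3%:R : R) <= m%:R - k%:R by rewrite lerBrDr -natrD ler_nat.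
have r1 : (x1%:R : R) <= k%:R by rewrite ler_nat.
have r4 : (x4%:R : R) <= k%:R by rewrite ler_nat.
have Hk := Hkey kb1 kb2 (ler0n _ _) r1 (ler0n _ _) r2 (ler0n _ _) r3 (ler0n _ _) r4.
rewrite !natrD in hcut *.
apply: (@final _ _ _ _ _ _ d0 mR).
- exact: Hk.
- exact: hcut.
Qed.
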